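(* Let $X_1,\dots,X_k$ be nonempty compact metric spaces. Every $(X_1,\dots,X_k)$-regular compact metric space $Y$ is also $(X_1\sqcup\dots\sqcup X_k)$-regular.
   Context: For nonempty compact metric spaces $Z_1,\dots,Z_m$, a compact metric space $Y$ is $(Z_1,\dots,Z_m)$-regular if it admits a countably infinite family $\mathcal Y=\mathcal Y_1\sqcup\dots\sqcup\mathcal Y_m$ of subsets such that: (a1) members of $\mathcal Y$ are pairwise disjoint and each member of $\mathcal Y_i$ is a subspace homeomorphic to $Z_i$; (a2) $\mathcal Y$ is null (for every $\varepsilon>0$ only finitely many members have diameter $\ge\varepsilon$, for a compatible metric); (a3) each member of $\mathcal Y$ has dense complement in $Y$; (a4) each $\bigcup\mathcal Y_i$ is dense in $Y$; (a5) any two points of $Y$ not in a common member of $\mathcal Y$ are separated by a subset of $Y$ that is open, closed and $\mathcal Y$-saturated (each member of $\mathcal Y$ is contained in it or disjoint from it). $X_1\sqcup\dots\sqcup X_k$ denotes the topological disjoint union (with $m=1$ in the definition). *)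

(* Defs.v *)
From HB Require Import structures.
From mathcomp Require Import all_boot all_order all_algebra.
From mathcomp Require Import all_classical all_reals.
From mathcomp Require Import topology metric_structure sigT_topology.
From mathcomp Require Import ereal.
Set Implicit Arguments.
Unset Strict Implicit.
Unset Printing Implicit Defensive.
Import Order.TTheory GRing.Theory Num.Theory.
Local Open Scope classical_set_scope.
Local Open Scope ring_scope.

Definition homeomorphic_subspace (Z Y : topologicalType) (A : set Y) : Prop :=
  exists (f : Z -> Y) (g : Y -> Z),
    continuous f /\ f @` setT = A /\ (forall z, g (f z) = z) /\
    {within A, continuous g}.

(* diameter of a subset of a metric space (extended real, -oo for the empty set) *)
Definition diam {R : realType} {Y : metricType R} (A : set Y) : \bar R :=
  ereal_sup [set (mdist x y)%:E | x in A & y in A].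

(* Y is (Z_1, ..., Z_m)-regular.  The countably infinite family is enumerated
   injectively by F : nat -> set Y, and lab n says which subfamily Y_i
   the member F n belongs to. *)
Definition regular {R : realType} (m : nat) (Z : 'I_m -> topologicalType)
    (Y : metricType R) : Prop :=
  exists (F : nat -> set Y) (lab : nat -> 'I_m),
    injective F /\
    (forall n n', n <> n' -> F n `&` F n' = set0) /\
    (forall n, homeomorphic_subspace (Z (lab n)) (F n)) /\
    (forall eps : R, 0 < eps -> finite_set [set n | (eps%:E <= diam (F n))%E]) /\
    (forall n, dense (~` F n)) /\
    (forall i, dense (\bigcup_(n in [set n | lab n = i]) F n)) /\
    (forall x y : Y, x <> y -> ~ (exists n, F n x /\ F n y) ->
       exists U : set Y, open U /\ closed U /\
         (forall n, F n `<=` U \/ F n `&` U = set0) /\ U x /\ ~ U y).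

(* Main.v *)
Require Import Defs.
From HB Require Import structures.
From mathcomp Require Import all_boot all_order all_algebra finmap.
From mathcomp Require Import all_classical all_reals.
From mathcomp Require Import topology metric_structure sigT_topology.
From mathcomp Require Import ereal lra.
Set Implicit Arguments.
Unset Strict Implicit.
Unset Printing Implicit Defensive.
Import Order.TTheory GRing.Theory Num.Theory.
Local Open Scope classical_set_scope.
Local Open Scope ring_scope.


Section pt.
Variables (T : topologicalType) (t0 : T).
Definition pT : Type := T.
HB.instance Definition _ := Topological.on pT.
HB.instance Definition _ := isPointed.Build pT t0.
Lemma cover_of_compact (A : set T) : compact A -> cover_compact A.
Proof.
move=> cA; have : @compact pT A by exact: cA.
by rewrite compact_cover.
Qed.
End pt.

Lemma my_cover (T : topologicalType) (A : set T) : compact A -> cover_compact A.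
Proof.
move=> cA I D f fo cov.
have [[a Aa]|A0] := pselect (A !=set0).
  exact: (@cover_of_compact T a A cA I D f fo cov).
exists fset0 => // x Ax; exfalso; apply: A0; by exists x.
Qed.

Section L1.
Variable (Y : topologicalType).
Variable (F : nat -> set Y).

Definition aon (S W : set Y) := S `<=` W \/ S `&` W = set0.
Definition cs (W : set Y) := clopen W /\ forall n, aon (F n) W.

Lemma aonC S W : aon S W -> aon S (~` W).
Proof.
case=> [SW|SW]; [right|left].
  by apply/seteqP; split => // x [/SW ? ?].
by move=> x Sx Wx; have : (S `&` W) x by []; rewrite SW.
Qed.

Lemma aonI S W1 W2 : aon S W1 -> aon S W2 -> aon S (W1 `&` W2).
Proof.
case=> [S1|S1]; last first.
  move=> _; right; apply/seteqP; split => // x [Sx [W1x _]].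
  by have : (S `&` W1) x by []; rewrite S1.
case=> [S2|S2]; first by left => x Sx; split; [apply S1|apply S2].
right; apply/seteqP; split => // x [Sx [_ W2x]].
by have : (S `&` W2) x by []; rewrite S2.
Qed.

Lemma aonT S : aon S setT. Proof. by left. Qed.

Lemma aonU S W1 W2 : aon S W1 -> aon S W2 -> aon S (W1 `|` W2).
Proof.
move=> h1 h2; have := aonC (aonI (aonC h1) (aonC h2)).
by rewrite -setCU setCK.
Qed.

Lemma csT : cs setT.
Proof. by split; [exact: clopenT| move=> n; exact: aonT]. Qed.

Lemma csI A B : cs A -> cs B -> cs (A `&` B).
Proof.
by move=> [cA aA] [cB aB]; split; [exact: clopenI| move=> n; exact: aonI].
Qed.

Lemma csC A : cs A -> cs (~` A).
Proof.
by move=> [cA aA]; split; [exact: clopenC| move=> n; exact: aonC].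
Qed.

Lemma csU A B : cs A -> cs B -> cs (A `|` B).
Proof.
by move=> [cA aA] [cB aB]; split; [exact: clopenU| move=> n; exact: aonU].
Qed.

Lemma cs_bigI {I : eqType} (s : seq I) (f : I -> set Y) :
  (forall i, i \in s -> cs (f i)) -> cs [set y | forall i, i \in s -> f i y].
Proof.
elim: s => [_|a s IH H].
  suff -> : [set y | forall i, i \in [::] -> f i y] = setT by exact: csT.
  by apply/seteqP; split => // y _ i.
have -> : [set y | forall i, i \in a :: s -> f i y] =
   f a `&` [set y | forall i, i \in s -> f i y].
  apply/seteqP; split => y.
    by move=> h; split; [apply: h; rewrite inE eqxx| move=> i hi; apply: h; rewrite inE hi orbT].
  by move=> [h1 h2] i; rewrite inE => /orP [/eqP ->|/h2].
apply: csI; first by apply: H; rewrite inE eqxx.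
by apply: IH => i hi; apply: H; rewrite inE hi orbT.
Qed.

Lemma cs_bigU {I : eqType} (s : seq I) (f : I -> set Y) :
  (forall i, i \in s -> cs (f i)) -> cs [set y | exists2 i, i \in s & f i y].
Proof.
move=> H.
have -> : [set y | exists2 i, i \in s & f i y] =
   ~` [set y | forall i, i \in s -> (~` f i) y].
  apply/seteqP; split => y.
    by move=> [i hi fy] h; exact: (h i hi fy).
  move=> h; apply: contrapT => h2; apply: h => i hi fy; apply: h2; by exists i.
by apply: csC; apply: cs_bigI => i /H; exact: csC.
Qed.

Lemma sep_compact (K C : set Y) : compact K -> compact C ->
  (forall p q, K p -> C q -> exists U, cs U /\ U p /\ ~ U q) ->
  exists V, cs V /\ K `<=` V /\ V `&` C = set0.
Proof.
move=> cK cC H.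
have inner : forall p, K p -> exists V, cs V /\ V p /\ V `&` C = set0.
  move=> p Kp.
  have [U HU] : exists U : Y -> set Y, forall q, C q -> cs (U q) /\ U q p /\ ~ U q q.
    have := @choice Y (set Y) (fun q U => C q -> cs U /\ U p /\ ~ U q).
    case.
      move=> q; have [Cq|nCq] := pselect (C q).
        by have [U hU] := H p q Kp Cq; exists U.
      by exists setT.
    by move=> f hf; exists f.
  move: cC => /my_cover /(_ Y C (fun q => ~` U q)).
  case.
  - by move=> q /HU [[[_ cl] _] _]; rewrite openC.
  - by move=> q Cq; exists q => //; have [_ [_]] := HU q Cq.
  move=> D' sD' cov.
  exists [set y | forall i, i \in D' -> U i y]; split.
    by apply: cs_bigI => i /sD'; rewrite inE => /HU [].
  split; first by move=> i /sD'; rewrite inE => /HU [_ []].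
  apply/seteqP; split => // y [h /cov [i /= hi nU]].
  by apply: nU; apply: h.
have [V HV] : exists V : Y -> set Y, forall p, K p -> cs (V p) /\ V p p /\ V p `&` C = set0.
  have := @choice Y (set Y) (fun p V => K p -> cs V /\ V p /\ V `&` C = set0).
  case.
    move=> p; have [Kp|nKp] := pselect (K p); first by have [V hV] := inner p Kp; exists V.
    by exists setT.
  by move=> f hf; exists f.
move: cK => /my_cover /(_ Y K V).
case.
- by move=> p /HV [[[]]].
- by move=> p Kp; exists p => //; have [_ []] := HV p Kp.
move=> D' sD' cov.
exists [set y | exists2 i, i \in D' & V i y]; split.
  by apply: cs_bigU => i /sD'; rewrite inE => /HV [].
split; first by move=> y /cov [i /= hi Vy]; exists i.
apply/seteqP; split => // y [[i hi Vy] Cy].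
have [_ [_ e]] := HV i (set_mem (sD' _ hi)).
by have : (V i `&` C) y by []; rewrite e.
Qed.

End L1.

Section Metric.
Variables (R : realType) (Y : metricType R).

Definition nb (r : R) (K : set Y) := [set y | exists2 a, K a & mdist a y < r].

Lemma open_mdist (A : set Y) :
  (forall x, A x -> exists2 e, 0 < e & forall y, mdist x y < e -> A y) -> open A.
Proof.
move=> H; rewrite openE => x Ax; rewrite /interior.
have [e e0 He] := H x Ax.
apply/nbhs_ballP; exists e => // y; rewrite ballEmdist; exact: He.
Qed.


Lemma nb_open r K : open (nb r K).
Proof.
apply: open_mdist => y [a Ka day].
exists (r - mdist a y); first by rewrite subr_gt0.
move=> z dyz; exists a => //.
rewrite (le_lt_trans (metric_triangle a y z))//.
by rewrite -ltrBrDl.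
Qed.

Lemma sub_nb r K : 0 < r -> K `<=` nb r K.
Proof. by move=> r0 x Kx; exists x => //; rewrite mdistxx. Qed.

Lemma closed_away (A : set Y) x : closed A -> ~ A x ->
  exists2 e, 0 < e & forall y, mdist x y < e -> ~ A y.
Proof.
move=> cA nAx.
have : open (~` A) by rewrite openC.
rewrite openE => /(_ x nAx); rewrite /interior => /nbhs_ballP [e e0 He].
exists e => // y dxy; apply: He; rewrite ballEmdist; exact: dxy.
Qed.

End Metric.

Section Top.
Variable (T : topologicalType).

Lemma denseI_open (U V : set T) : open U -> dense U -> open V -> dense V ->
  dense (U `&` V).
Proof.
move=> oU dU oV dV O O0 oO.
rewrite setIA; apply: dV; [exact: dU| exact: openI].
Qed.

Lemma dense_sup (U V : set T) : U `<=` V -> dense U -> dense V.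
Proof.
move=> UV dU O O0 oO; have [x [Ox Ux]] := dU O O0 oO.
by exists x; split => //; apply: UV.
Qed.

Lemma closed_finU (N : nat) (S : nat -> set T) (Q : nat -> Prop) :
  (forall j, closed (S j)) ->
  closed [set y | exists j, (j < N)%N /\ Q j /\ S j y].
Proof.
move=> cS; elim: N => [|N IH].
  suff -> : [set y | exists j, (j < 0)%N /\ Q j /\ S j y] = set0 by exact: closed0.
  by apply/seteqP; split => // y [j []].
have -> : [set y | exists j, (j < N.+1)%N /\ Q j /\ S j y] =
  [set y | exists j, (j < N)%N /\ Q j /\ S j y] `|` [set y | Q N /\ S N y].
  apply/seteqP; split => y.
    move=> [j [jN [Qj Sj]]]; move: jN; rewrite ltnS leq_eqVlt => /orP [/eqP ej|jN].
      by right; rewrite -ej.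
    by left; exists j.
  case => [[j [jN [Qj Sj]]]|[QN SN]]; first by exists j; split => //; exact: ltnW.
  by exists N.
apply: closedU => //.
have [QN|nQN] := pselect (Q N).
  suff -> : [set y | Q N /\ S N y] = S N by [].
  by apply/seteqP; split => y //; case.
suff -> : [set y | Q N /\ S N y] = set0 by exact: closed0.
by apply/seteqP; split => y // [].
Qed.

End Top.


Section Constr.
Variables (R : realType) (Y : metricType R) (k : nat) (F : nat -> set Y)
  (lab : nat -> 'I_k).
Hypothesis hY : compact [set: Y].
Hypothesis Fcpt : forall n, compact (F n).
Hypothesis Fne : forall n, F n !=set0.
Hypothesis Fdisj : forall n n', n <> n' -> F n `&` F n' = set0.
Hypothesis Fsep : forall x y : Y, x <> y -> ~ (exists n, F n x /\ F n y) ->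
       exists U : set Y, open U /\ closed U /\
         (forall n, F n `<=` U \/ F n `&` U = set0) /\ U x /\ ~ U y.
Hypothesis Fdense : forall n, dense (~` F n).
Hypothesis Flab : forall i, dense (\bigcup_(n in [set n | lab n = i]) F n).
Hypothesis Fsmall : forall eps : R, 0 < eps -> exists N, forall n,
  (exists a b, F n a /\ F n b /\ eps <= mdist a b) -> (n < N)%N.

Lemma closedF n : closed (F n).
Proof. apply: compact_closed; [exact: metric_hausdorff| exact: Fcpt]. Qed.

Lemma Fmeet n n' y : F n y -> F n' y -> n = n'.
Proof.
move=> h h'; apply: contrapT => nn.
by have : (F n `&` F n') y by []; rewrite Fdisj.
Qed.

Lemma sepF (K C : set Y) : compact K -> closed C ->
  (forall m y, F m y -> K y -> F m `<=` K) -> K `&` C = set0 ->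
  exists V, cs F V /\ K `<=` V /\ V `&` C = set0.
Proof.
move=> cK cC satK KC.
apply: sep_compact => //.
  exact: (subclosed_compact cC hY).
move=> p q Kp Cq.
have pq : p <> q.
  move=> e; have : (K `&` C) p by (split => //; rewrite e).
  by rewrite KC.
have nc : ~ (exists n, F n p /\ F n q).
  move=> [n [Fp Fq]]; have /(_ q Fq) Kq := satK n p Fp Kp.
  by have : (K `&` C) q by []; rewrite KC.
have [U [oU [clU [aU [Up nUq]]]]] := Fsep pq nc.
by exists U; split => //; split.
Qed.

Lemma clopen_nb (g : nat -> set Y) N (K : set Y) r : 0 < r -> compact K ->
  (forall m y, F m y -> K y -> F m `<=` K) -> (forall j, closed (g j)) ->
  (forall j, (j < N)%N -> K `&` g j !=set0 -> g j `<=` K) ->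
  exists V, cs F V /\ K `<=` V /\ V `<=` nb r K /\
    forall j, (j < N)%N -> aon (g j) V.
Proof.
move=> r0 cK satK cg gK.
pose C := ~` nb r K `|` [set y | exists j, (j < N)%N /\ K `&` g j = set0 /\ g j y].
have cC : closed C.
  apply: closedU; first by rewrite closedC; exact: nb_open.
  exact: closed_finU.
have KC : K `&` C = set0.
  apply/seteqP; split => // y [Ky [nby|[j [jN [e gy]]]]].
    by apply: nby; exact: sub_nb.
  by have : (K `&` g j) y by []; rewrite e.
have [V [csV [KV VC]]] := sepF cK cC satK KC.
exists V; split => //; split => //; split.
  move=> y Vy; apply: contrapT => ny.
  have : (V `&` C) y by (split => //; left).
  by rewrite VC.
move=> j jN.
have [ne|e] := pselect (K `&` g j !=set0).
  by left => y /(gK j jN ne) /KV.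
right; apply/seteqP; split => // y [gy Vy].
have e' : K `&` g j = set0.
  by apply/eqP; apply/negPn; apply/negP => /set0P.
have : (V `&` C) y by (split => //; right; exists j).
by rewrite VC.
Qed.


Definition grp (m : 'I_k -> nat) : set Y := \bigcup_i F (m i).

Lemma closed_grp m : closed (grp m).
Proof. by apply: closed_bigcup => [|i _]; [exact: finite_finset| exact: closedF]. Qed.

Lemma compact_grp m : compact (grp m).
Proof. apply: (@subclosed_compact _ _ setT); [exact: closed_grp|exact: hY|done]. Qed.

Definition smallK (N : nat) (gm : nat -> 'I_k -> nat) (K : set Y) :=
  (exists p, K = [set p]) \/ (exists m, K = F m) \/
  (exists j, (j < N)%N /\ K = grp (gm j)).

Lemma new_part (N : nat) (gm : nat -> 'I_k -> nat) r (y0 : Y) : 0 < r ->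
  (forall j j' i i', (j < N)%N -> (j' < N)%N -> gm j i = gm j' i' -> j = j') ->
  exists (rr : nat) (P : nat -> set Y),
   [/\ (forall l, (l < rr)%N -> cs F (P l)),
       (forall y, exists l, (l < rr)%N /\ P l y),
       (forall j l, (j < N)%N -> (l < rr)%N -> aon (grp (gm j)) (P l)) &
       (forall l, (l < rr)%N -> exists K, smallK N gm K /\ P l `<=` nb r K)].
Proof.
move=> r0 ginj.
have pt : forall p, exists V, [/\ cs F V, V p,
   (forall j, (j < N)%N -> aon (grp (gm j)) V) &
   exists K, smallK N gm K /\ V `<=` nb r K].
  move=> p.
  have [[j [jN gp]]|ng] := pselect (exists j, (j < N)%N /\ grp (gm j) p).
    have [||||V [csV [KV [Vnb aV]]]] := @clopen_nb (fun j => grp (gm j)) N (grp (gm j)) r r0.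
    - exact: compact_grp.
    - move=> m y Fy [i _ Fiy] z Fz; exists i => //.
      by rewrite -(Fmeet Fy Fiy).
    - by move=> j'; exact: closed_grp.
    - move=> j' j'N [z [[i _ Fz] [i' _ Fz']]].
      by rewrite (ginj j' j i' i j'N jN (Fmeet Fz' Fz)).
    exists V; split => //; first exact: KV.
    by exists (grp (gm j)); split => //; right; right; exists j.
  have [[m Fmp]|nm] := pselect (exists m, F m p).
    have [||||V [csV [KV [Vnb aV]]]] := @clopen_nb (fun j => grp (gm j)) N (F m) r r0.
    - exact: Fcpt.
    - by move=> m' y Fy Fy'; rewrite (Fmeet Fy Fy').
    - by move=> j'; exact: closed_grp.
    - move=> j' j'N [z [Fz [i _ Fz']]]; exfalso; apply: ng; exists j'; split => //.
      by exists i => //; rewrite -(Fmeet Fz Fz').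
    exists V; split => //; first exact: KV.
    by exists (F m); split => //; right; left; exists m.
  have [||||V [csV [KV [Vnb aV]]]] := @clopen_nb (fun j => grp (gm j)) N [set p] r r0.
  - exact: compact_set1.
  - by move=> m y Fy /= yp; exfalso; apply: nm; exists m; rewrite -yp.
  - by move=> j'; exact: closed_grp.
  - move=> j' j'N [z [/= -> gz]]; exfalso; apply: ng; by exists j'.
  exists V; split => //; first exact: KV.
  by exists [set p]; split => //; left; exists p.
have [Vf HV] := choice pt.
move: hY => /my_cover /(_ Y setT Vf).
case.
- by move=> p _; have [[[]]] := HV p.
- by move=> p _; exists p => //; have [] := HV p.
move=> D' _ cov.
pose s : seq Y := D'.
exists (size s), (fun l => Vf (nth y0 s l)); split.
- by move=> l _; have [] := HV (nth y0 s l).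
- move=> y; have [q /= qD Vqy] := cov y I.
  exists (index q s); rewrite index_mem nth_index //.
- by move=> j l jN _; have [] := HV (nth y0 s l); auto.
- by move=> l _; have [] := HV (nth y0 s l).
Qed.

Lemma bound_ex (n : nat) (M : nat -> 'I_k -> nat) :
  exists B, forall j i, (j < n)%N -> (M j i < B)%N.
Proof.
elim: n => [|n [B HB]]; first by exists 0%N.
exists (maxn B (\max_i (M n i).+1)) => j i.
rewrite ltnS leq_eqVlt => /orP [/eqP ->|jn].
  by rewrite leq_max (@leq_bigmax _ (fun i => (M n i).+1) i) orbT.
by rewrite leq_max HB.
Qed.

Lemma nbhs_finall (c : Y) N (S : nat -> set Y) :
  (forall j, (j < N)%N -> nbhs c (S j)) ->
  nbhs c [set y | forall j, (j < N)%N -> S j y].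
Proof.
elim: N => [_|N IH H].
  by apply: nearW => y j; rewrite ltn0.
apply: filterS (filterI (IH (fun j jN => H j (ltnW jN))) (H N (ltnSn N))).
move=> y [h1 h2] j; rewrite ltnS leq_eqVlt => /orP [/eqP ->//|]; exact: h1.
Qed.

Lemma dense_notE N : dense (~` [set y | exists m, (m < N)%N /\ True /\ F m y]).
Proof.
elim: N => [|N IH].
  suff -> : ~` [set y | exists m, (m < 0)%N /\ True /\ F m y] = setT.
    by move=> O O0 _; rewrite setIT.
  by apply/seteqP; split => // y _ [m []].
have -> : ~` [set y | exists m, (m < N.+1)%N /\ True /\ F m y] =
  ~` [set y | exists m, (m < N)%N /\ True /\ F m y] `&` ~` F N.
  apply/seteqP; split => y.
    move=> h; split.
      by move=> [m [mN [_ Fm]]]; apply: h; exists m; split => //; exact: ltnW.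
    by move=> FN; apply: h; exists N.
  move=> [h1 h2] [m [mN [_ Fm]]]; move: mN; rewrite ltnS leq_eqVlt.
  case/orP => [/eqP em|mN]; first by apply: h2; rewrite -em.
  by apply: h1; exists m.
apply: denseI_open => //.
- by rewrite openC; apply: closed_finU => j; exact: closedF.
- by rewrite openC; exact: closedF.
Qed.

Lemma open_notE N : open (~` [set y | exists m, (m < N)%N /\ True /\ F m y]).
Proof. by rewrite openC; apply: closed_finU => j; exact: closedF. Qed.

Lemma new_group (n : nat) (M : nat -> 'I_k -> nat) (rr : nat -> nat)
    (P : nat -> nat -> set Y) :
  (forall t l, (t < n)%N -> (l < rr t)%N -> cs F (P t l)) ->
  exists mem : 'I_k -> nat,
   [/\ (forall i, lab (mem i) = i),
       (forall j i i', (j < n)%N -> M j i <> mem i'),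
       (exists i, mem i = n) \/ (exists j i, (j < n)%N /\ M j i = n),
       (exists i0, forall a, grp mem a ->
           exists c, F (mem i0) c /\ mdist c a < (n.+1%:R)^-1) &
       (forall t l, (t < n)%N -> (l < rr t)%N -> aon (grp mem) (P t l))].
Proof.
move=> csP.
have [B HB] := bound_ex n M.
have [m0 [ung cov]] : exists m0, (forall j i, (j < n)%N -> M j i <> m0) /\
    ((exists j i, (j < n)%N /\ M j i = n) \/ m0 = n).
  have [h|h] := pselect (exists j i, (j < n)%N /\ M j i = n).
    exists B; split; last by left.
    by move=> j i jn e; have := HB j i jn; rewrite e ltnn.
  exists n; split; last by right.
  by move=> j i jn e; apply: h; exists j, i.
pose i0 := lab m0.
have [c Fc] := Fne m0.
pose r0 : R := (n.+1%:R)^-1 / 2.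
have r0p : 0 < r0 by rewrite /r0 divr_gt0 // invr_gt0 ltr0n.
pose A := [set y | forall t, (t < n)%N -> forall l, (l < rr t)%N -> (P t l y <-> P t l c)].
have nA : nbhs c (A `&` [set y | mdist c y < r0]).
  apply: filterI.
    apply: nbhs_finall => t tn; apply: nbhs_finall => l lt.
    have [[oP clP] _] := csP t l tn lt.
    have [Pc|nPc] := pselect (P t l c).
      apply: filterS (open_nbhs_nbhs (conj oP Pc)) => y Py; split => //.
    have onP : open (~` P t l) by rewrite openC.
    apply: filterS (open_nbhs_nbhs (conj onP nPc)) => y nPy; split => // //.
  have hb := @nbhsx_ballx R Y c r0 r0p.
  apply: filterS hb => y; rewrite ballEmdist; exact.
move: nA; rewrite nbhsE => -[O [oO Oc] OA].
have [Nsm HNsm] := Fsmall r0p.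
pose B' := maxn B Nsm.
pose E := [set y | exists m, (m < B')%N /\ True /\ F m y].
have pick : forall i, exists m, (i = i0 -> m = m0) /\
   (i <> i0 -> [/\ lab m = i, (B' <= m)%N & exists z, F m z /\ O z]).
  move=> i; have [ii0|ni] := pselect (i = i0).
    by exists m0; split.
  have [w [Ow nEw]] := dense_notE B' (ex_intro _ c Oc) oO.
  have [z [[Oz nEz] [m /= lm Fmz]]] := Flab i (ex_intro _ w (conj Ow nEw))
     (openI oO (open_notE B')).
  exists m; split => // _; split => //.
    rewrite leqNgt; apply/negP => mB; apply: nEz; exists m; split => //.
  by exists z.
have [mem Hmem] := choice pick.
have lab_mem : forall i, lab (mem i) = i.
  move=> i; have [->|ni] := pselect (i = i0).
    by have [h _] := Hmem i0; rewrite h.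
  by have [_ /(_ ni) []] := Hmem i.
have wit : forall i, exists w, F (mem i) w /\ (A w /\ mdist c w < r0).
  move=> i; have [ei|ni] := pselect (i = i0).
    have [h _] := Hmem i; rewrite h //; exists c; split => //; split.
      by move=> t _ l _.
    by rewrite mdistxx.
  have [_ /(_ ni) [_ _ [z [Fz Oz]]]] := Hmem i.
  by exists z; split => //; exact: OA.
exists mem; split => //.
- move=> j i i' jn e.
  have [ei|ni] := pselect (i' = i0).
    by have [/(_ ei) em _] := Hmem i'; apply: (ung j i jn); rewrite e em.
  have [_ /(_ ni) [_ Bm _]] := Hmem i'.
  have := HB j i jn; rewrite e => h.
  by have := leq_trans h (leq_trans (leq_maxl B Nsm) Bm); rewrite ltnn.
- case: cov => [h|en]; first by right.
  left; exists i0; by have [h _] := Hmem i0; rewrite h.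
- exists i0 => a [i _ Fa].
  have [ei|ni] := pselect (i = i0).
    exists a; split; first by rewrite -ei.
    by rewrite mdistxx invr_gt0 ltr0n.
  have [h _] := Hmem i0; rewrite h //.
  exists c; split => //.
  have [w [Fw [_ dcw]]] := wit i.
  have dwa : mdist w a < r0.
    rewrite ltNge; apply/negP => le.
    have [_ /(_ ni) [_ Bm _]] := Hmem i.
    have := HNsm (mem i) (ex_intro _ w (ex_intro _ a (conj Fw (conj Fa le)))).
    move=> h2; have := leq_trans h2 (leq_trans (leq_maxr B Nsm) Bm).
    by rewrite ltnn.
  rewrite (le_lt_trans (metric_triangle c w a)) //.
  have -> : (n.+1%:R)^-1 = r0 + r0 :> R by rewrite /r0 -splitr.
  by rewrite ltrD.
- move=> t l tn lt.
  have [_ aP] := csP t l tn lt.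
  have [Pc|nPc] := pselect (P t l c).
    left => a [i _ Fa]; have [w [Fw [Aw _]]] := wit i.
    have Pw : P t l w by apply/(Aw t tn l lt).
    case: (aP (mem i)) => [sub|dis]; first exact: sub.
    by have : (F (mem i) `&` P t l) w by []; rewrite dis.
  right; apply/seteqP; split => // a [[i _ Fa] Pa].
  have [w [Fw [Aw _]]] := wit i.
  case: (aP (mem i)) => [sub|dis].
    by apply: nPc; apply/(Aw t tn l lt); exact: sub.
  by have : (F (mem i) `&` P t l) a by []; rewrite dis.
Qed.

Definition St := (('I_k -> nat) * (nat * (nat -> set Y)))%type.
Definition st0 : St := (fun _ => 0%N, (0%N, fun _ => set0)).
Definition Mh (h : seq St) j := (nth st0 h j).1.
Definition rh (h : seq St) j := (nth st0 h j).2.1.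
Definition Ph (h : seq St) j := (nth st0 h j).2.2.

Record Inv (h : seq St) : Prop := {
 iv_lab : forall j i, (j < size h)%N -> lab (Mh h j i) = i;
 iv_inj : forall j j' i i', (j < size h)%N -> (j' < size h)%N ->
   Mh h j i = Mh h j' i' -> j = j';
 iv_cov : forall m, (m < size h)%N -> exists j i, (j < size h)%N /\ Mh h j i = m;
 iv_diam : forall j, (j < size h)%N -> exists i0, forall a, grp (Mh h j) a ->
   exists c, F (Mh h j i0) c /\ mdist c a < (j.+1%:R)^-1;
 iv_cs : forall t l, (t < size h)%N -> (l < rh h t)%N -> cs F (Ph h t l);
 iv_cover : forall t y, (t < size h)%N -> exists l, (l < rh h t)%N /\ Ph h t l y;
 iv_aon : forall t j l, (t < size h)%N -> (j < size h)%N -> (l < rh h t)%N ->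
   aon (grp (Mh h j)) (Ph h t l);
 iv_small : forall t l, (t < size h)%N -> (l < rh h t)%N ->
   exists K, smallK (size h) (Mh h) K /\ Ph h t l `<=` nb (t.+1%:R)^-1 K }.

Lemma nthR h s j : (j < size h)%N -> nth st0 (rcons h s) j = nth st0 h j.
Proof. by move=> jn; rewrite nth_rcons jn. Qed.

Lemma nthRn h s : nth st0 (rcons h s) (size h) = s.
Proof. by rewrite nth_rcons ltnn eqxx. Qed.

Lemma ltnSE (j n : nat) : (j < n.+1)%N -> j = n \/ (j < n)%N.
Proof. by rewrite ltnS leq_eqVlt => /orP [/eqP ->|]; [left|right]. Qed.

Lemma Inv_nil : Inv [::].
Proof. by split. Qed.

Lemma step (y0 : Y) h : Inv h -> exists s, Inv (rcons h s).
Proof.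
move=> Ih; set n := size h.
have [mem [lab_mem ung cov diam aonP]] := new_group (Mh h) (iv_cs Ih).
pose gm j := if (j < n)%N then Mh h j else mem.
have ginj : forall j j' i i', (j < n.+1)%N -> (j' < n.+1)%N -> gm j i = gm j' i' -> j = j'.
  move=> j j' i i' /ltnSE [->|jn] /ltnSE [->|j'n]; rewrite /gm ?ltnn ?jn ?j'n //.
  - by move=> e; exfalso; apply: (ung j' i' i j'n); rewrite e.
  - by move=> e; exfalso; apply: (ung j i i' jn); rewrite e.
  - exact: (iv_inj Ih).
have r1p : 0 < (n.+1%:R)^-1 :> R by rewrite invr_gt0 ltr0n.
have [rr [P [csP coverP aonP2 smallP]]] := new_part y0 r1p ginj.
exists (mem, (rr, P)).
set h' := rcons h _.
have sz : size h' = n.+1 by rewrite size_rcons.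
have gmE : forall j, (j < n.+1)%N -> Mh h' j = gm j.
  move=> j /ltnSE [->|jn]; rewrite /Mh /gm.
    by rewrite ltnn nthRn.
  by rewrite jn nthR.
have MhE : forall j, (j < n)%N -> Mh h' j = Mh h j.
  by move=> j jn; rewrite gmE ?/gm ?jn // ltnW.
have rhE : forall t, (t < n)%N -> rh h' t = rh h t.
  by move=> t tn; rewrite /rh nthR.
have PhE : forall t, (t < n)%N -> Ph h' t = Ph h t.
  by move=> t tn; rewrite /Ph nthR.
have rhn : rh h' n = rr by rewrite /rh nthRn.
have Phn : Ph h' n = P by rewrite /Ph nthRn.
have Mhn : Mh h' n = mem by rewrite /Mh nthRn.
split; rewrite sz.
- move=> j i /ltnSE [->|jn]; first by rewrite Mhn.
  by rewrite MhE // (iv_lab Ih).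
- move=> j j' i i' jn j'n; rewrite !gmE //; exact: ginj.
- move=> m /ltnSE [->|mn].
    case: cov => [[i e]|[j [i [jn e]]]].
      by exists n, i; rewrite Mhn.
    by exists j, i; rewrite MhE // ltnW.
  have [j [i [jn e]]] := iv_cov Ih mn.
  by exists j, i; rewrite MhE // ltnW.
- move=> j /ltnSE [->|jn]; first by rewrite Mhn.
  by rewrite MhE //; exact: (iv_diam Ih).
- move=> t l /ltnSE [->|tn]; first by rewrite rhn Phn; exact: csP.
  by rewrite rhE // PhE //; exact: (iv_cs Ih).
- move=> t y /ltnSE [->|tn]; first by rewrite rhn Phn; exact: coverP.
  by rewrite rhE // PhE //; exact: (iv_cover Ih).
- move=> t j l /ltnSE [->|tn] jn.
    by rewrite rhn Phn gmE //; exact: aonP2.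
  rewrite rhE // PhE //.
  case/ltnSE: jn => [->|jn]; first by rewrite Mhn; exact: aonP.
  by rewrite MhE //; exact: (iv_aon Ih).
- move=> t l /ltnSE [->|tn].
    rewrite rhn Phn => lr; have [K [sK PK]] := smallP l lr; exists K; split => //.
    case: sK => [?|[?|[j [jn ->]]]]; [by left|by right; left|].
    by right; right; exists j; split => //; rewrite gmE.
  rewrite rhE // PhE // => lr; have [K [sK PK]] := iv_small Ih tn lr.
  exists K; split => //.
  case: sK => [?|[?|[j [jn ->]]]]; [by left|by right; left|].
  by right; right; exists j; split; [exact: ltnW| rewrite MhE].
Qed.

Variable y0 : Y.

Definition next (h : seq St) : seq St :=
  match pselect (exists s, Inv (rcons h s)) with
  | left e => rcons h (proj1_sig (cid e))
  | right _ => rcons h st0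
  end.

Fixpoint hist n := if n is n'.+1 then next (hist n') else [::].

Lemma size_hist n : size (hist n) = n.
Proof.
elim: n => //= n IH; rewrite /next; case: pselect => [e|_]; by rewrite size_rcons IH.
Qed.

Lemma Inv_hist n : Inv (hist n).
Proof.
elim: n => [|n IH] /=; first exact: Inv_nil.
rewrite /next; case: pselect => [e|ne]; first exact: (proj2_sig (cid e)).
by exfalso; apply: ne; exact: step.
Qed.

Lemma hist_rcons n : exists s, hist n.+1 = rcons (hist n) s.
Proof. by rewrite /= /next; case: pselect => [e|_]; eexists. Qed.

Lemma nth_hist m j : (j < m)%N -> nth st0 (hist m) j = nth st0 (hist j.+1) j.
Proof.
elim: m => // m IH /ltnSE [->//|jm].
have [s ->] := hist_rcons m; rewrite nthR ?size_hist //; exact: IH.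
Qed.

Definition Mf j := Mh (hist j.+1) j.
Definition rf t := rh (hist t.+1) t.
Definition Pf t := Ph (hist t.+1) t.
Definition Gf j := grp (Mf j).

Lemma MhE m j : (j < m)%N -> Mh (hist m) j = Mf j.
Proof. by move=> jm; rewrite /Mh nth_hist. Qed.
Lemma rhE m j : (j < m)%N -> rh (hist m) j = rf j.
Proof. by move=> jm; rewrite /rh nth_hist. Qed.
Lemma PhE m j : (j < m)%N -> Ph (hist m) j = Pf j.
Proof. by move=> jm; rewrite /Ph nth_hist. Qed.

Lemma Mf_lab j i : lab (Mf j i) = i.
Proof. have H := iv_lab (Inv_hist j.+1); rewrite size_hist in H; exact: H. Qed.

Lemma inv_small (e : R) : 0 < e -> exists N, forall j, (N <= j)%N -> (j.+1%:R)^-1 < e.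
Proof.
move=> e0; exists (Num.Def.archi_bound (e^-1)) => j Nj.
have ie0 : 0 <= e^-1 by rewrite invr_ge0 ltW.
have h1 := @archi_boundP R (e^-1) ie0.
have h2 : e^-1 < j.+1%:R.
  by apply: (lt_le_trans h1); rewrite ler_nat (leq_trans Nj).
rewrite -[e]invrK ltf_pV2 // ?posrE ?invr_gt0 // ltr0n.
Qed.

Lemma Mf_inj j j' i i' : Mf j i = Mf j' i' -> j = j'.
Proof.
move=> e; set m := (maxn j j').+1.
have H := iv_inj (Inv_hist m); rewrite size_hist in H.
have jm : (j < m)%N by rewrite ltnS leq_maxl.
have j'm : (j' < m)%N by rewrite ltnS leq_maxr.
by apply: (H j j' i i' jm j'm); rewrite !MhE.
Qed.

Lemma Mf_cov m : exists j i, (j <= m)%N /\ Mf j i = m.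
Proof.
have H := iv_cov (Inv_hist m.+1); rewrite size_hist in H.
have [j [i [jm e]]] := H m (ltnSn m).
by exists j, i; split; [|rewrite -(MhE jm)].
Qed.

Lemma Gf_disj j j' : j <> j' -> Gf j `&` Gf j' = set0.
Proof.
move=> jj; apply/seteqP; split => // y [[i _ Fy] [i' _ Fy']].
by apply: jj; apply: (@Mf_inj j j' i i'); exact: (Fmeet Fy Fy').
Qed.

Lemma Gf_diam j : exists i0, forall a, Gf j a ->
   exists c, F (Mf j i0) c /\ mdist c a < (j.+1%:R)^-1.
Proof.
have H := iv_diam (Inv_hist j.+1); rewrite size_hist in H.
exact: (H j (ltnSn j)).
Qed.

Lemma Pf_cs t l : (l < rf t)%N -> cs F (Pf t l).
Proof.
have H := iv_cs (Inv_hist t.+1); rewrite size_hist in H.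
exact: (H t l (ltnSn t)).
Qed.

Lemma Pf_cover t y : exists l, (l < rf t)%N /\ Pf t l y.
Proof.
have H := iv_cover (Inv_hist t.+1); rewrite size_hist in H.
exact: (H t y (ltnSn t)).
Qed.

Lemma Pf_aon t j l : (l < rf t)%N -> aon (Gf j) (Pf t l).
Proof.
move=> lt; set m := (maxn t j).+1.
have H := iv_aon (Inv_hist m); rewrite size_hist in H.
have tm : (t < m)%N by rewrite ltnS leq_maxl.
have jm : (j < m)%N by rewrite ltnS leq_maxr.
have := H t j l tm jm; rewrite (rhE tm) (PhE tm) (MhE jm); exact.
Qed.

Lemma Pf_small t l : (l < rf t)%N -> exists K,
  ((exists p, K = [set p]) \/ (exists m, K = F m) \/ (exists j, K = Gf j)) /\
  Pf t l `<=` nb (t.+1%:R)^-1 K.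
Proof.
move=> lt.
have H := iv_small (Inv_hist t.+1); rewrite size_hist in H.
have [K [sK PK]] := H t l (ltnSn t) lt.
exists K; split => //.
case: sK => [?|[?|[j [jn ->]]]]; [by left|by right; left|].
by right; right; exists j; rewrite /Gf (MhE jn).
Qed.

Lemma min_bound (N : nat) (Q : nat -> R -> Prop) :
  (forall j r r', Q j r -> 0 < r' -> r' <= r -> Q j r') ->
  (forall j, (j < N)%N -> exists2 r, 0 < r & Q j r) ->
  exists2 r, 0 < r & forall j, (j < N)%N -> Q j r.
Proof.
move=> mono; elim: N => [_|N IH H]; first by exists 1 => //.
have [r1 r10 H1] := IH (fun j jN => H j (ltnW jN)).
have [r2 r20 H2] := H N (ltnSn N).
exists (Num.min r1 r2); first by rewrite lt_min r10 r20.
move=> j /ltnSE [->|jN].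
  by apply: mono H2 _ _; [rewrite lt_min r10 r20| rewrite ge_min lexx orbT].
by apply: mono (H1 j jN) _ _; [rewrite lt_min r10 r20| rewrite ge_min lexx].
Qed.

Lemma arith1 (eps r u v w z : R) : u < r -> v < r -> r < eps / 4 -> eps <= z ->
  z <= u + w + v -> eps / 2 <= w.
Proof. move=> *; lra. Qed.

Lemma Gf_null (eps : R) : 0 < eps -> exists N, forall j,
  (exists a b, Gf j a /\ Gf j b /\ eps <= mdist a b) -> (j < N)%N.
Proof.
move=> e0.
have e4 : 0 < eps / 4 by rewrite divr_gt0.
have e2 : 0 < eps / 2 by rewrite divr_gt0.
have [N1 HN1] := inv_small e4.
have [N2 HN2] := Fsmall e2.
exists (maxn N1 N2) => j [a [b [Ga [Gb le]]]].
rewrite ltnNge; apply/negP => Nj.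
have [i0 Hd] := Gf_diam j.
have [c [Fc dca]] := Hd a Ga.
have [c' [Fc' dcb]] := Hd b Gb.
have jN1 : (N1 <= j)%N by rewrite (leq_trans (leq_maxl _ _) Nj).
have := HN1 j jN1; set r := (j.+1%:R)^-1 => rlt.
have tri : mdist a b <= mdist a c + mdist c c' + mdist c' b.
  rewrite (le_trans (metric_triangle a c b)) // -addrA lerD2l.
  exact: metric_triangle.
have big : eps / 2 <= mdist c c'.
  rewrite metric_sym in dca.
  exact: (arith1 dca dcb rlt le tri).
have := HN2 (Mf j i0) (ex_intro _ c (ex_intro _ c' (conj Fc (conj Fc' big)))).
have [j' [i' [j'm e]]] := Mf_cov (Mf j i0).
rewrite (Mf_inj e) in j'm.
move=> h; have := leq_ltn_trans j'm h.
have := leq_trans (leq_maxr N1 N2) Nj.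
by move=> h1 h2; have := leq_ltn_trans h1 h2; rewrite ltnn.
Qed.

Lemma arith2 (d r e : R) (u v : R) : d = 4 * e -> 0 < e -> r < e -> u < r -> v < r ->
  d <= u + v -> False.
Proof. move=> *; lra. Qed.

Lemma arith3 (d r e : R) (u v w : R) : d = 4 * e -> 0 < e -> r < e -> u < r -> v < r ->
  w < e -> d <= u + w + v -> False.
Proof. move=> *; lra. Qed.

Lemma Gf_sep x y : x <> y -> ~ (exists j, Gf j x /\ Gf j y) ->
  exists U : set Y, open U /\ closed U /\
    (forall j, Gf j `<=` U \/ Gf j `&` U = set0) /\ U x /\ ~ U y.
Proof.
move=> xy nxy.
have [[t [l [lt [Px nPy]]]]|H] :=
  pselect (exists t l, (l < rf t)%N /\ Pf t l x /\ ~ Pf t l y).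
  have [[oP clP] _] := Pf_cs lt.
  exists (Pf t l); split => //; split => //; split => //.
  by move=> j; exact: Pf_aon.
exfalso.
have H' : forall t l, (l < rf t)%N -> Pf t l x -> Pf t l y.
  move=> t l lt Px; apply: contrapT => nPy; apply: H; by exists t, l.
pose e := mdist x y / 4.
have e0 : 0 < e by rewrite divr_gt0 // mdist_gt0; apply/eqP.
have de : mdist x y = 4 * e by rewrite /e; lra.
have [NS HNS] := Gf_null e0.
pose Q j r := forall a b, Gf j a -> Gf j b -> ~ (mdist a x < r /\ mdist b y < r).
have [r r0 Hr] : exists2 r, 0 < r & forall j, (j < NS)%N -> Q j r.
  apply: min_bound.
    move=> j r r' Qr r'0 r'r a b Ga Gb [ax bx]; apply: (Qr a b Ga Gb); split.
      exact: lt_le_trans ax r'r.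
    exact: lt_le_trans bx r'r.
  move=> j _.
  have [nGx|nGy] : ~ Gf j x \/ ~ Gf j y.
    apply: contrapT => hh; apply: nxy; exists j; split; apply: contrapT => h2; apply: hh; auto.
    have [r r0 Hr] := closed_away (closed_grp (m := Mf j)) nGx.
    exists r => // a b Ga _ [ax _]; apply: (Hr a) => //; by rewrite metric_sym.
  have [r r0 Hr] := closed_away (closed_grp (m := Mf j)) nGy.
  exists r => // a b _ Gb [_ bx]; apply: (Hr b) => //; by rewrite metric_sym.
have mr : 0 < Num.min e r by rewrite lt_min e0 r0.
have [T HT] := inv_small mr.
have := HT T (leqnn T); set d := (T.+1%:R)^-1 => dlt.
have [de' dr] : d < e /\ d < r by move: dlt; rewrite lt_min => /andP [].
have [l [lT Px]] := Pf_cover T x.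
have Py := H' T l lT Px.
have [K [sK PK]] := Pf_small lT.
have [a Ka ax] := PK x Px.
have [b Kb bx] := PK y Py.
have tri2 : forall u : Y, mdist x y <= mdist u x + mdist u y.
  by move=> u; rewrite (le_trans (metric_triangle x u y)) // metric_sym.
have groupcase : forall j, K `<=` Gf j -> False.
  move=> j KG.
  have [jN|Nj] := ltnP j NS.
    apply: (Hr j jN a b (KG a Ka) (KG b Kb)); split; [exact: lt_trans ax dr|exact: lt_trans bx dr].
  have ab : mdist a b < e.
    rewrite ltNge; apply/negP => le.
    have := HNS j (ex_intro _ a (ex_intro _ b (conj (KG a Ka) (conj (KG b Kb) le)))).
    by rewrite ltnNge Nj.
  apply: (arith3 de e0 de' ax bx ab).
  rewrite (le_trans (metric_triangle x a y)) // [mdist x a]metric_sym.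
  rewrite -addrA lerD2l (le_trans (metric_triangle a b y)) //.
case: sK => [[p Kp]|[[m Km]|[j Kj]]].
- rewrite Kp in Ka Kb; rewrite /= in Ka Kb; subst a b.
  exact: (arith2 de e0 de' ax bx (tri2 p)).
- have [j [i [_ e']]] := Mf_cov m.
  apply: (groupcase j); rewrite Km -e' => z Fz; by exists i.
- by apply: (groupcase j); rewrite Kj.
Qed.

Lemma Gf_dense_compl j : dense (~` Gf j).
Proof.
have [B HB] := bound_ex 1 (fun _ => Mf j).
apply: dense_sup (dense_notE B) => y nE [i _ Fy]; apply: nE.
by exists (Mf j i); split => //; exact: (HB 0%N i).
Qed.

Lemma Gf_union_dense (A : set nat) : (forall j, A j) -> dense (\bigcup_(j in A) Gf j).
Proof.
move=> hA; apply: dense_sup (Flab (lab 0%N)) => y [n _ Fy].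
have [j [i [_ e]]] := Mf_cov n.
by exists j => //; exists i => //; rewrite e.
Qed.

Lemma Gf_ne j : Gf j !=set0.
Proof. have [z Fz] := Fne (Mf j (lab 0%N)); by exists z; exists (lab 0%N). Qed.

End Constr.

Section Hom.
Variables (k : nat) (X : 'I_k -> topologicalType) (Y : topologicalType)
  (S : 'I_k -> set Y).
Hypothesis Scl : forall i, closed (S i).
Hypothesis Sdisj : forall i j, i <> j -> S i `&` S j = set0.
Hypothesis Shom : forall i, homeomorphic_subspace (X i) (S i).
Variable s0 : {i & X i}.

Lemma hom_parts : exists (fi : forall i, X i -> Y) (gi : forall i, Y -> X i),
  forall i, continuous (fi i) /\ fi i @` setT = S i /\ (forall z, gi i (fi i z) = z) /\
    {within S i, continuous (gi i)}.
Proof.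
exists (fun i => proj1_sig (cid (Shom i))).
exists (fun i => proj1_sig (cid (proj2_sig (cid (Shom i))))).
move=> i; exact: (proj2_sig (cid (proj2_sig (cid (Shom i))))).
Qed.

Definition Gh (gi : forall i, Y -> X i) (y : Y) : {i & X i} :=
  match pselect (exists i, S i y) with
  | left h => existT _ (proj1_sig (cid h)) (gi (proj1_sig (cid h)) y)
  | right _ => s0
  end.

Lemma GhE gi i y : S i y -> Gh gi y = existT _ i (gi i y).
Proof.
move=> Sy; rewrite /Gh; case: pselect => [h|nh]; last by exfalso; apply: nh; exists i.
case: (cid h) => i' Si' /=.
have ii : i' = i.
  apply: contrapT => ne; have : (S i' `&` S i) y by [].
  by rewrite Sdisj.
by subst i'.
Qed.

Lemma hom_union : homeomorphic_subspace {i & X i} (\bigcup_i S i).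
Proof.
have [fi [gi Hfg]] := hom_parts.
exists (unstable.sigT_fun fi), (Gh gi); split.
  by apply: sigT_continuous => i; have [] := Hfg i.
split.
  apply/seteqP; split => y.
    move=> [[i x] _ <-]; exists i => //=.
    have [_ [<- _]] := Hfg i; by exists x.
  move=> [i _ Sy]; have [_ [e _]] := Hfg i.
  rewrite -e in Sy; case: Sy => x _ <-.
  by exists (existT _ i x).
split.
  move=> [i x] /=; rewrite (@GhE gi i (fi i x)); last first.
    by have [_ [<- _]] := Hfg i; exists x.
  by have [_ [_ [-> _]]] := Hfg i.
have loc : forall i, {within S i, continuous (Gh gi)}.
  move=> i.
  apply: (@subspace_eq_continuous _ _ _ (existT _ i \o gi i)).
    by move=> y; rewrite inE => Sy; rewrite /from_subspace /= (GhE gi Sy).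
  move=> y; apply: (@continuous_comp (subspace (S i)) (X i) _ (gi i) (existT _ i) y).
    by have [_ [_ [_ c]]] := Hfg i; exact: c.
  exact: existT_continuous.
have ind : forall s : seq 'I_k,
    {within [set y | exists2 i, i \in s & S i y], continuous (Gh gi)}.
  elim => [|a s IH].
    suff -> : [set y | exists2 i, i \in [::] & S i y] = set0.
      exact: continuous_subspace0.
    by apply/seteqP; split => // y [].
  have -> : [set y | exists2 i, i \in a :: s & S i y] =
      S a `|` [set y | exists2 i, i \in s & S i y].
    apply/seteqP; split => y.
      move=> [i]; rewrite inE => /orP [/eqP ->|iS Sy]; first by left.
      by right; exists i.
    case=> [Sy|[i iS Sy]]; first by exists a => //; rewrite inE eqxx.
    by exists i => //; rewrite inE iS orbT.
  apply: withinU_continuous => //.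
  have -> : [set y | exists2 i, i \in s & S i y] =
      \bigcup_(i in [set i | i \in s]) S i by [].
  by apply: closed_bigcup => //.
have -> : \bigcup_i S i = [set y | exists2 i, i \in enum 'I_k & S i y].
  apply/seteqP; split => y [i _ Sy]; by exists i => //; rewrite mem_enum.
exact: ind.
Qed.

End Hom.

Lemma seq_bound (s : seq nat) : exists N, forall n, n \in s -> (n < N)%N.
Proof.
elim: s => [|a s [N HN]]; first by exists 0%N.
exists (maxn a.+1 N) => n; rewrite inE => /orP [/eqP ->|ns].
  by rewrite leq_max leqnn.
by rewrite leq_max HN // orbT.
Qed.

Lemma fin_bound (A : set nat) : finite_set A -> exists N, forall n, A n -> (n < N)%N.
Proof.
move=> /finite_fsetP [X ->]; have [N HN] := seq_bound X.
by exists N => n /= nX; apply: HN.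
Qed.

Lemma bound_fin (A : set nat) N : (forall n, A n -> (n < N)%N) -> finite_set A.
Proof. by move=> H; apply: (sub_finite_set _ (finite_II N)) => n /H. Qed.

Theorem proposition2p2 (R : realType) (k : nat) (X : 'I_k -> metricType R)
    (Y : metricType R) :
  (forall i, compact [set: X i]) ->
  (forall i, [set: X i] !=set0) ->
  compact [set: Y] ->
  regular (fun i => (X i : topologicalType)) Y ->
  regular (fun _ : 'I_1 => ({i : 'I_k & X i} : topologicalType)) Y.
Proof.
move=> cX neX cY [F [lab [injF [disj [hom [null [dcomp [dlab sep]]]]]]]].
have Fcpt : forall n, compact (F n).
  move=> n; have [f [g [cf [imf _]]]] := hom n; rewrite -imf.
  apply: continuous_compact; [exact: continuous_subspaceT | exact: cX].
have Fne : forall n, F n !=set0.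
  move=> n; have [f [g [_ [imf _]]]] := hom n; have [x _] := neX (lab n).
  by exists (f x); rewrite -imf; exists x.
have Fsmall : forall eps : R, 0 < eps -> exists N, forall n,
    (exists a b, F n a /\ F n b /\ eps <= mdist a b) -> (n < N)%N.
  move=> eps e0; have [N HN] := fin_bound (null eps e0).
  exists N => n [a [b [Fa [Fb le]]]]; apply: HN => /=.
  apply: (@le_trans _ _ (mdist a b)%:E); first by rewrite lee_fin.
  by apply: ereal_sup_ubound; exists a => //; exists b.
have [y0 _] := Fne 0%N.
pose G := Gf F lab.
have Gdisj := @Gf_disj R Y k F lab cY Fcpt Fne disj sep dcomp dlab Fsmall y0.
have Gne := @Gf_ne R Y k F lab Fne.
exists G, (fun _ => ord0).
split.
  move=> j j' e; apply: contrapT => jj.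
  have := Gdisj j j' jj; rewrite -/G e setIid => e'.
  by have := Gne j'; rewrite -/G e' => -[].
split; first exact: Gdisj.
split.
  move=> j /=.
  have [x0 _] := neX (lab 0%N).
  apply: (@hom_union k (fun i => (X i : topologicalType)) Y (fun i => F (Mf F lab j i))).
  - by move=> i; exact: (closedF Fcpt).
  - move=> i i' ii; apply: (disj) => e; apply: ii.
    by rewrite -(@Mf_lab R Y k F lab cY Fcpt Fne disj sep dcomp dlab Fsmall y0 j i) e
      (@Mf_lab R Y k F lab cY Fcpt Fne disj sep dcomp dlab Fsmall y0 j i').
  - move=> i; have := hom (Mf F lab j i).
    by rewrite (@Mf_lab R Y k F lab cY Fcpt Fne disj sep dcomp dlab Fsmall y0 j i).
  - exact: (existT _ (lab 0%N) x0).
split.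
  move=> eps e0.
  have e2 : 0 < eps / 2 by rewrite divr_gt0.
  have [N HN] := @Gf_null R Y k F lab cY Fcpt Fne disj sep dcomp dlab Fsmall y0 (eps / 2) e2.
  apply: (@bound_fin _ N) => j /= le.
  apply: HN.
  have : ((eps / 2)%:E < diam (G j))%E.
    apply: (lt_le_trans _ le); rewrite lte_fin; lra.
  move=> /ereal_sup_gt [z [a Ga [b Gb <-]]].
  rewrite lte_fin => lt; exists a, b; split => //; split => //; exact: ltW.
split.
  move=> j; exact: (@Gf_dense_compl R Y k F lab Fcpt dcomp).
split.
  move=> i; apply: (@Gf_union_dense R Y k F lab cY Fcpt Fne disj sep dcomp dlab Fsmall y0).
  by move=> j /=; apply/val_inj; case: i => [[]].
move=> x y xy nxy.
exact: (@Gf_sep R Y k F lab cY Fcpt Fne disj sep dcomp dlab Fsmall y0 x y xy nxy).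
Qed.
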